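(* Let $n\in\mathbb N$, let $f(z)=\sum_{j\ge0}a_jz^j$ be extremal for $M_n$ with $a_0>0$, and let $P(z)=a_n+2\sum_{j=1}^na_{n-j}z^j$. Then every zero of $P$ lies in the annulus $\{z: 1\le|z|\le r\}$, where \[r=\frac1{a_0}\sqrt{\sum_{j=0}^{n-1}|a_j|^2+\frac{a_n^2}{4}}.\]
   Context: $\mathbb D$ is the open unit disc; $\mathcal B_0=\{f$ holomorphic on $\mathbb D: 0<|f|\le1\}$; $M_n(f)=\mathrm{Re}\,a_n$; $f\in\mathcal B_0$ is extremal for $M_n$ if $M_n(f)\ge M_n(F)$ for all $F\in\mathcal B_0$ (for such $f$, $a_n>0$). *)

(* Defs.v *)
From Stdlib Require Import Reals.
From Coquelicot Require Import Coquelicot.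
Open Scope R_scope.

Fixpoint sumR (f : nat -> R) (n : nat) : R :=
  match n with O => 0 | S m => sumR f m + f m end.
Fixpoint sumC (f : nat -> C) (n : nat) : C :=
  match n with O => RtoC 0 | S m => Cplus (sumC f m) (f m) end.

(* A holomorphic function on the open unit disc D is represented by its Taylor
   coefficient sequence a : nat -> C, f(z) = sum_j a_j z^j, the series
   converging on all of D. *)
Definition in_disc (z : C) : Prop := Cmod z < 1.

Definition B0 (a : nat -> C) : Prop :=
  forall z : C, in_disc z ->
    exists fz : C,
      (is_pseries (K := C_AbsRing) (V := C_NormedModule) a z fz) /\
      (0 < Cmod fz <= 1).

Definition Mn (n : nat) (a : nat -> C) : R := Re (a n).

Definition extremal (n : nat) (a : nat -> C) : Prop :=
  B0 a /\ forall b, B0 b -> Mn n b <= Mn n a.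

Definition Ppoly (n : nat) (a : nat -> C) (z : C) : C :=
  Cplus (a n) (Cmult (RtoC 2)
     (sumC (fun k => Cmult (a (n - S k)%nat) (Cpow z (S k))) n)).

(* Main.v *)
Require Import Defs.
From Stdlib Require Import Reals Lra Lia Psatz Arith.
From Coquelicot Require Import Coquelicot.
Open Scope R_scope.

Definition pshift (m : nat) (a : nat -> C) (k : nat) : C :=
  if Nat.leb m k then a (k - m)%nat else RtoC 0.

Notation isps := (is_pseries (K := C_AbsRing) (V := C_NormedModule)).

Lemma isps_shift m a (z s : C) : isps a z s -> isps (pshift m a) z (Cmult (Cpow z m) s).
Proof.
  intro H. induction m as [|m IH].
  - eapply is_pseries_ext; [|replace (Cmult (Cpow z 0) s) with s by (simpl; ring); exact H].
    intro k. unfold pshift. simpl. now rewrite Nat.sub_0_r.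
  - apply is_pseries_incr_1 in IH.
    eapply is_pseries_ext; [| replace (Cmult (Cpow z (S m)) s) with (scal z (Cmult (Cpow z m) s)) by (simpl; change (scal z (Cmult (Cpow z m) s)) with (Cmult z (Cmult (Cpow z m) s)); ring); exact IH].
    intro k. unfold pshift, PS_incr_1. destruct k; simpl; reflexivity.
Qed.

Definition polyv (c : nat -> C) (K : nat) (z : C) : C :=
  sumC (fun j => Cmult (c j) (Cpow z j)) K.
Definition conv (c : nat -> C) (K : nat) (a : nat -> C) (k : nat) : C :=
  sumC (fun j => Cmult (c j) (pshift j a k)) K.

Lemma isps_conv c K a (z s : C) : isps a z s -> isps (conv c K a) z (Cmult (polyv c K z) s).
Proof.
  intro H. induction K as [|K IH].
  - pose proof (is_pseries_scal (RtoC 0) _ _ _ (Cmult_comm _ _) H) as H0.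
    eapply is_pseries_ext; [| replace (Cmult (polyv c 0 z) s) with (scal (RtoC 0) s) by (unfold polyv; simpl; change (scal ?x ?y) with (Cmult x y); ring); exact H0].
    intro k. unfold PS_scal, conv. simpl. change (scal ?x ?y) with (Cmult x y). ring.
  - pose proof (is_pseries_scal (c K) _ _ _ (Cmult_comm _ _) (isps_shift K a z s H)) as H2.
    pose proof (is_pseries_plus _ _ _ _ _ IH H2) as H3.
    eapply is_pseries_ext; [| replace (Cmult (polyv c (S K) z) s) with
      (plus (Cmult (polyv c K z) s) (scal (c K) (Cmult (Cpow z K) s))) by
      (unfold polyv; simpl; change (plus ?x ?y) with (Cplus x y); change (scal ?x ?y) with (Cmult x y); ring); exact H3].
    intro k. reflexivity.
Qed.

Lemma Cmod_sq_le (h : C) M : Cmod h <= M -> Re h ^ 2 + Im h ^ 2 <= M * M.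
Proof. intro H. rewrite <- Cmod2_alt. pose proof (Cmod_ge_0 h). nra. Qed.

Lemma var n a c K d M : extremal n a -> 0 < d ->
  (forall z, in_disc z -> d <= Re (polyv c K z) /\ Cmod (polyv c K z) <= M) ->
  0 <= Re (conv c K a n).
Proof.
  intros [HB Hext] Hd Hh.
  destruct (Rle_lt_dec 0 (Re (conv c K a n))) as [ok|Hneg]; [exact ok|exfalso].
  assert (HM : d <= M).
  { destruct (Hh (RtoC 0)) as [h1 h2].
    - unfold in_disc. rewrite Cmod_0. lra.
    - pose proof (re_le_Cmod (polyv c K 0)). pose proof (Rle_abs (Re (polyv c K 0))). lra. }
  set (e := d / (2 * M * M)).
  assert (He : 0 < e) by (unfold e; apply Rdiv_lt_0_compat; nra).
  assert (HeM : e * (2 * M * M) = d) by (unfold e; field; lra).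
  set (b := fun k => Cminus (a k) (Cmult (RtoC e) (conv c K a k))).
  assert (Hb : B0 b).
  { intros z Hz. destruct (HB z Hz) as [fz [Hs Hm]].
    pose proof (isps_conv c K a z fz Hs) as H1.
    pose proof (is_pseries_scal (RtoC e) _ _ _ (Cmult_comm _ _) H1) as H2.
    pose proof (is_pseries_minus _ _ _ _ _ Hs H2) as H3.
    exists (Cmult fz (Cminus (RtoC 1) (Cmult (RtoC e) (polyv c K z)))).
    split.
    - assert (Eq : Cmult fz (Cminus (RtoC 1) (Cmult (RtoC e) (polyv c K z))) =
        Cplus fz (Copp (Cmult (RtoC e) (Cmult (polyv c K z) fz)))) by ring.
      rewrite Eq.
      eapply is_pseries_ext; [| exact H3].
      intro k. unfold PS_minus, PS_scal, b. change (plus ?x ?y) with (Cplus x y); change (scal ?x ?y) with (Cmult x y);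
         change (opp ?x) with (Copp x). unfold Cminus. reflexivity.
    - destruct (Hh z Hz) as [h1 h2].
      pose proof (Cmod_sq_le _ _ h2) as h3.
      pose proof (re_le_Cmod (polyv c K z)) as h4. pose proof (Rle_abs (Re (polyv c K z))) as h5.
      set (h := polyv c K z) in *.
      set (g := Cminus (RtoC 1) (Cmult (RtoC e) h)).
      assert (Rg : Re g = 1 - e * Re h) by (unfold g; destruct h as [hx hy]; compute -[Rplus Rmult Ropp Rminus]; ring_simplify; ring).
      assert (Ig : Im g = - (e * Im h)) by (unfold g; destruct h as [hx hy]; compute -[Rplus Rmult Ropp Rminus]; ring_simplify; ring).
      assert (g2 : Cmod g ^ 2 <= 1).
      { rewrite Cmod2_alt, Rg, Ig.
        assert (e * (Re h ^ 2 + Im h ^ 2) <= e * (M * M)) by (apply Rmult_le_compat_l; lra).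
        assert (e * Re h >= e * d) by (apply Rle_ge, Rmult_le_compat_l; lra).
        nra. }
      assert (gpos : 0 < Re g).
      { rewrite Rg. assert (e * Re h <= e * M) by (apply Rmult_le_compat_l; lra).
        assert (e * M <= 1/2).
        { assert (e * M * (2 * M) = d) by (rewrite <- HeM; ring).
          assert (0 < M) by lra. nra. }
        lra. }
      pose proof (re_le_Cmod g) as g3. pose proof (Rle_abs (Re g)) as g4.
      pose proof (Cmod_ge_0 g).
      rewrite Cmod_mult. split.
      + apply Rmult_lt_0_compat; lra.
      + assert (Cmod g <= 1) by nra. destruct Hm. 
        pose proof (Cmod_ge_0 fz). nra. }
  pose proof (Hext b Hb) as Hc. unfold Mn in Hc.
  assert (Rb : Re (b n) = Re (a n) - e * Re (conv c K a n)).
  { unfold b. destruct (a n) as [x y]. destruct (conv c K a n) as [u v].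
    compute -[Rplus Rmult Ropp Rminus]; ring_simplify; ring. }
  rewrite Rb in Hc.
  assert (Re (conv c K a n) * e < 0) by nra.
  nra.
Qed.

Lemma im_an n a : extremal n a -> Im (a n) = 0.
Proof.
  intro Hx.
  assert (Ht : forall t, 0 <= Re (a n) - t * Im (a n)).
  { intro t.
    pose proof (var n a (fun _ => (1, t)) 1 1 (Cmod (1,t)) Hx Rlt_0_1) as H.
    assert (Hp : forall z, polyv (fun _ => (1,t)) 1 z = (1,t)).
    { intro z. unfold polyv. simpl. ring. }
    assert (Hc : conv (fun _ => (1,t)) 1 a n = Cmult (1,t) (a n)).
    { unfold conv, pshift. simpl. rewrite Nat.sub_0_r. ring. }
    rewrite Hc in H.
    assert (E : Re (Cmult (1, t) (a n)) = Re (a n) - t * Im (a n)).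
    { destruct (a n) as [x y]. compute -[Rplus Rmult Ropp Rminus]; ring_simplify; ring. }
    rewrite <- E. apply H. intros z _. rewrite Hp. simpl. lra. }
  destruct (Req_dec (Im (a n)) 0) as [h|h]; [exact h|exfalso].
  specialize (Ht ((Re (a n) + 1) / Im (a n))).
  replace ((Re (a n) + 1) / Im (a n) * Im (a n)) with (Re (a n) + 1) in Ht by (field; exact h).
  lra.
Qed.

Lemma polyv_minus c1 c2 K z :
  polyv (fun j => Cminus (c1 j) (c2 j)) K z = Cminus (polyv c1 K z) (polyv c2 K z).
Proof. induction K; unfold polyv in *; simpl. ring. rewrite IHK. ring. Qed.

Lemma conv_minus c1 c2 K a k :
  conv (fun j => Cminus (c1 j) (c2 j)) K a k = Cminus (conv c1 K a k) (conv c2 K a k).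
Proof. induction K; unfold conv in *; simpl. ring. rewrite IHK. ring. Qed.

Lemma conv_trunc c K a k : (k < K)%nat -> conv c K a k = conv c (S k) a k.
Proof.
  induction K; intro H; [lia|].
  destruct (Nat.eq_dec k K) as [->|ne]; [reflexivity|].
  rewrite <- IHK by lia. unfold conv. simpl.
  unfold pshift. replace (Nat.leb K k) with false by (symmetry; apply Nat.leb_gt; lia). ring.
Qed.

Lemma conv_c1 n a z0 :
  conv (fun j => if Nat.eqb j 0 then RtoC 1 else Cmult (RtoC 2) (Cpow z0 j)) (S n) a n = Ppoly n a z0.
Proof.
  unfold Ppoly.
  assert (G : forall m, (m <= n)%nat ->
    conv (fun j => if Nat.eqb j 0 then RtoC 1 else Cmult (RtoC 2) (Cpow z0 j)) (S m) a n =
    Cplus (a n) (Cmult (RtoC 2) (sumC (fun k => Cmult (a (n - S k)%nat) (Cpow z0 (S k))) m))).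
  { induction m; intro Hm.
    - unfold conv, pshift. simpl. rewrite Nat.sub_0_r. ring.
    - unfold conv in *. change (sumC ?f (S (S m))) with (Cplus (sumC f (S m)) (f (S m))).
      rewrite IHm by lia.
      change (sumC (fun k => Cmult (a (n - S k)%nat) (Cpow z0 (S k))) (S m)) with (Cplus (sumC (fun k => Cmult (a (n - S k)%nat) (Cpow z0 (S k))) m) (Cmult (a (n - S m)%nat) (Cpow z0 (S m)))).
      unfold pshift.
      replace (Nat.leb (S m) n) with true by (symmetry; apply Nat.leb_le; lia).
      simpl Nat.eqb. cbv beta iota. ring. }
  apply G. lia.
Qed.

Lemma conv_c2 n a (eta : R) :
  conv (fun j => if Nat.eqb j n then RtoC eta else RtoC 0) (S n) a n = Cmult (RtoC eta) (a 0%nat).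
Proof.
  assert (G : forall m, (m <= n)%nat -> conv (fun j => if Nat.eqb j n then RtoC eta else RtoC 0) m a n = RtoC 0).
  { induction m; intro Hm; unfold conv in *; simpl. reflexivity.
    rewrite IHm by lia. replace (Nat.eqb m n) with false by (symmetry; apply Nat.eqb_neq; lia). ring. }
  unfold conv in *. simpl sumC. rewrite G by lia. rewrite Nat.eqb_refl. unfold pshift.
  rewrite Nat.leb_refl, Nat.sub_diag. ring.
Qed.

Lemma polyv_c2 n (eta : R) K z :
  polyv (fun j => if Nat.eqb j n then RtoC eta else RtoC 0) K z =
  if Nat.ltb n K then Cmult (RtoC eta) (Cpow z n) else RtoC 0.
Proof.
  induction K; unfold polyv in *; simpl sumC. reflexivity.
  rewrite IHK. destruct (Nat.eq_dec K n) as [->|ne].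
  - rewrite Nat.eqb_refl, Nat.ltb_irrefl. replace (Nat.ltb n (S n)) with true by (symmetry; apply Nat.ltb_lt; lia). ring.
  - replace (Nat.eqb K n) with false by (symmetry; apply Nat.eqb_neq; lia).
    destruct (Nat.ltb n K) eqn:E1.
    + apply Nat.ltb_lt in E1. replace (Nat.ltb n (S K)) with true by (symmetry; apply Nat.ltb_lt; lia). ring.
    + apply Nat.ltb_ge in E1. replace (Nat.ltb n (S K)) with false by (symmetry; apply Nat.ltb_ge; lia). ring.
Qed.

Lemma polyv_c1_id z0 K z : (1 <= K)%nat ->
  Cmult (polyv (fun j => if Nat.eqb j 0 then RtoC 1 else Cmult (RtoC 2) (Cpow z0 j)) K z)
        (Cminus (RtoC 1) (Cmult z0 z)) =
  Cminus (Cplus (RtoC 1) (Cmult z0 z)) (Cmult (RtoC 2) (Cpow (Cmult z0 z) K)).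
Proof.
  induction K; intro HK; [lia|].
  destruct K.
  - unfold polyv. simpl. ring.
  - unfold polyv in *. change (sumC ?f (S (S K))) with (Cplus (sumC f (S K)) (f (S K))).
    rewrite Cmult_plus_distr_r, IHK by lia. simpl Nat.eqb. cbv beta iota.
    rewrite (Cpow_mult_l z0 z (S (S K))). rewrite (Cpow_mult_l z0 z (S K)).
    change (Cpow z0 (S (S K))) with (Cmult z0 (Cpow z0 (S K))).
    change (Cpow z (S (S K))) with (Cmult z (Cpow z (S K))). ring.
Qed.

Lemma pow_le1 x k : 0 <= x <= 1 -> x ^ k <= 1.
Proof. intro H. rewrite <- (pow1 k). apply pow_incr. lra. Qed.

Lemma polyv_c1_bound z0 K z : Cmod z0 < 1 -> Cmod z < 1 ->
  Cmod (polyv (fun j => if Nat.eqb j 0 then RtoC 1 else Cmult (RtoC 2) (Cpow z0 j)) K z) <= 2 * INR K.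
Proof.
  intros H0 H1. induction K.
  - unfold polyv. simpl. rewrite Cmod_0. lra.
  - unfold polyv in *. simpl sumC. rewrite S_INR.
    eapply Rle_trans; [apply Cmod_triangle|].
    assert (Cmod (Cmult (if Nat.eqb K 0 then RtoC 1 else Cmult (RtoC 2) (Cpow z0 K)) (Cpow z K)) <= 2).
    { rewrite Cmod_mult, Cmod_pow.
      assert (0 <= Cmod z ^ K <= 1).
      { split. apply pow_le, Cmod_ge_0. apply pow_le1; split; [apply Cmod_ge_0 | lra]. }
      destruct (Nat.eqb K 0).
      - rewrite Cmod_1. nra.
      - rewrite Cmod_mult, Cmod_pow, Cmod_R, Rabs_pos_eq by lra.
        assert (0 <= Cmod z0 ^ K <= 1).
        { split. apply pow_le, Cmod_ge_0. apply pow_le1; split; [apply Cmod_ge_0 | lra]. }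
        nra. }
    lra.
Qed.

Lemma comp_bound (c : C) r : Cmod c <= r -> Re c ^ 2 + Im c ^ 2 <= r ^ 2 /\ Rabs (Re c) <= r /\ Rabs (Im c) <= r.
Proof.
  intro H. pose proof (Cmod_ge_0 c). rewrite <- Cmod2_alt.
  assert (Cmod c ^ 2 <= r ^ 2) by nra.
  pose proof (Cmod2_alt c).
  split; [lra|]. split.
  - rewrite <- (Rabs_pos_eq r) by lra. apply Rsqr_le_abs_0. unfold Rsqr. nra.
  - rewrite <- (Rabs_pos_eq r) by lra. apply Rsqr_le_abs_0. unfold Rsqr. nra.
Qed.

Lemma reA_bound (A w : C) K rho : Cmod w <= rho -> rho < 1 ->
  Cmult A (Cminus (RtoC 1) w) = Cminus (Cplus (RtoC 1) w) (Cmult (RtoC 2) (Cpow w K)) ->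
  rho ^ K <= (1 - rho ^ 2) / 12 -> (1 - rho ^ 2) / 8 <= Re A.
Proof.
  intros Hw Hr HE HK.
  assert (HwK : Cmod (Cpow w K) <= rho ^ K).
  { rewrite Cmod_pow. apply pow_incr. split; [apply Cmod_ge_0|lra]. }
  destruct (comp_bound _ _ Hw) as [w2 [wx wy]].
  destruct (comp_bound _ _ HwK) as [_ [ux uy]].
  assert (0 <= rho) by (pose proof (Cmod_ge_0 w); lra).
  assert (0 <= rho ^ K) by (apply pow_le; lra).
  destruct (Cpow w K) as [u v]. destruct A as [p q]. destruct w as [x y].
  simpl in *.
  assert (E1 : p * (1 - x) + q * y = 1 + x - 2 * u).
  { apply (f_equal fst) in HE. revert HE. compute -[Rplus Rmult Ropp Rminus]. intro HE. lra. }
  assert (E2 : q * (1 - x) - p * y = y - 2 * v).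
  { apply (f_equal snd) in HE. revert HE. compute -[Rplus Rmult Ropp Rminus]. intro HE. lra. }
  assert (Key : p * ((1 - x) ^ 2 + y ^ 2) = (1 + x - 2 * u) * (1 - x) - (y - 2 * v) * y).
  { rewrite <- E1, <- E2. ring. }
  apply Rabs_le_between in wx. apply Rabs_le_between in wy.
  apply Rabs_le_between in ux. apply Rabs_le_between in uy.
  assert (T1 : Rabs (u * (1 - x)) <= rho ^ K * 2).
  { rewrite Rabs_mult. apply Rmult_le_compat; try apply Rabs_pos.
    apply Rabs_le; lra. apply Rabs_le; lra. }
  assert (T2 : Rabs (v * y) <= rho ^ K * 1).
  { rewrite Rabs_mult. apply Rmult_le_compat; try apply Rabs_pos.
    apply Rabs_le; lra. apply Rabs_le; lra. }
  apply Rabs_le_between in T1. apply Rabs_le_between in T2.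
  assert (N : (1 + x - 2 * u) * (1 - x) - (y - 2 * v) * y >= (1 - rho ^ 2) / 2).
  { assert (x ^ 2 + y ^ 2 <= rho ^ 2) by lra. nra. }
  assert (Dpos : 0 < (1 - x) ^ 2 + y ^ 2) by nra.
  assert (D4 : (1 - x) ^ 2 + y ^ 2 <= 4) by nra.
  assert (0 < 1 - rho ^ 2) by nra.
  assert (pp : 0 < p) by nra.
  nra.
Qed.

Lemma Re_minus (x y : C) : Re (Cminus x y) = Re x - Re y.
Proof. destruct x, y. compute -[Rplus Rmult Ropp Rminus]. ring. Qed.

Lemma Re_etaa (eta : R) (x : C) : Re (Cmult (RtoC eta) x) = eta * Re x.
Proof. destruct x. compute -[Rplus Rmult Ropp Rminus]. ring. Qed.

Lemma lower n a z0 : extremal n a -> 0 < Re (a 0%nat) -> Ppoly n a z0 = RtoC 0 -> 1 <= Cmod z0.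
Proof.
  intros Hx Ha0 HP.
  destruct (Rle_lt_dec 1 (Cmod z0)) as [ok|Hlt]; [exact ok|exfalso].
  set (rho := Cmod z0) in *.
  assert (r0 : 0 <= rho) by apply Cmod_ge_0.
  assert (r2 : 0 < 1 - rho ^ 2) by nra.
  destruct (pow_lt_1_zero rho ltac:(rewrite Rabs_pos_eq; lra) ((1 - rho ^ 2) / 12) ltac:(lra)) as [N HN].
  set (K := Nat.max N (S n)).
  assert (HK : rho ^ K <= (1 - rho ^ 2) / 12).
  { specialize (HN K ltac:(unfold K; lia)). rewrite Rabs_pos_eq in HN by (apply pow_le; lra). lra. }
  set (eta := (1 - rho ^ 2) / 16).
  assert (he : 0 < eta) by (unfold eta; lra).
  set (c1 := fun j => if Nat.eqb j 0 then RtoC 1 else Cmult (RtoC 2) (Cpow z0 j)).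
  set (c2 := fun j => if Nat.eqb j n then RtoC eta else RtoC 0).
  pose proof (var n a (fun j => Cminus (c1 j) (c2 j)) K eta (2 * INR K + eta) Hx he) as H.
  rewrite conv_minus in H.
  rewrite (conv_trunc c1 K a n) in H by (unfold K; lia).
  rewrite (conv_trunc c2 K a n) in H by (unfold K; lia).
  unfold c1, c2 in H. rewrite conv_c1, conv_c2, HP in H.
  rewrite Re_minus, Re_etaa in H. simpl (Re (RtoC 0)) in H.
  assert (0 <= 0 - eta * Re (a 0%nat)).
  { apply H. intros z Hz. unfold in_disc in Hz.
    rewrite polyv_minus. unfold c2. rewrite polyv_c2.
    replace (Nat.ltb n K) with true by (symmetry; apply Nat.ltb_lt; unfold K; lia).
    assert (HB : Cmod (Cmult (RtoC eta) (Cpow z n)) <= eta).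
    { rewrite Cmod_mult, Cmod_R, Rabs_pos_eq, Cmod_pow by lra.
      assert (Cmod z ^ n <= 1) by (apply pow_le1; split; [apply Cmod_ge_0|lra]).
      nra. }
    split.
    - rewrite Re_minus.
      assert (HA : (1 - rho ^ 2) / 8 <= Re (polyv c1 K z)).
      { apply (reA_bound _ (Cmult z0 z) K rho); auto.
        - rewrite Cmod_mult. pose proof (Cmod_ge_0 z). fold rho. nra.
        - unfold c1. apply polyv_c1_id. unfold K; lia. }
      pose proof (re_le_Cmod (Cmult (RtoC eta) (Cpow z n))).
      pose proof (Rle_abs (Re (Cmult (RtoC eta) (Cpow z n)))).
      unfold c1 in HA. assert (Eeta : eta = (1 - rho^2)/16) by reflexivity. lra.
    - unfold Cminus. eapply Rle_trans; [apply Cmod_triangle|]. rewrite Cmod_opp.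
      pose proof (polyv_c1_bound z0 K z Hlt Hz). unfold c1. lra. }
  assert (0 < eta * Re (a 0%nat)) by (apply Rmult_lt_0_compat; lra).
  lra.
Qed.

Lemma sumR_ext f g m : (forall k, (k < m)%nat -> f k = g k) -> sumR f m = sumR g m.
Proof. induction m; intro H; simpl; [reflexivity|]. rewrite IHm by (intros; apply H; lia). rewrite H by lia. reflexivity. Qed.

Lemma sumR_le f g m : (forall k, (k < m)%nat -> f k <= g k) -> sumR f m <= sumR g m.
Proof. induction m; intro H; simpl; [lra|].
  assert (A1 : sumR f m <= sumR g m) by (apply IHm; intros; apply H; lia).
  assert (A2 : f m <= g m) by (apply H; lia). lra. Qed.

Lemma sumR_plus f g m : sumR (fun k => f k + g k) m = sumR f m + sumR g m.
Proof. induction m; simpl; [lra|]. rewrite IHm. ring. Qed.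

Lemma sumR_scal c f m : sumR (fun k => c * f k) m = c * sumR f m.
Proof. induction m; simpl; [ring|]. rewrite IHm. ring. Qed.

Lemma sumR_nonneg f m : (forall k, 0 <= f k) -> 0 <= sumR f m.
Proof. intro H. induction m; simpl; [lra|]. pose proof (H m). lra. Qed.

Lemma sumR_shift g m : sumR g (S m) = g 0%nat + sumR (fun k => g (S k)) m.
Proof. induction m; simpl in *; [ring|]. rewrite IHm. ring. Qed.

Lemma sumR_rev f m : sumR (fun k => f (m - k)%nat) m = sumR (fun k => f (S k)) m.
Proof.
  revert f. induction m; intro f; [reflexivity|].
  change (sumR (fun k => f (S m - k)%nat) (S m)) with (sumR (fun k => f (S m - k)%nat) m + f (S m - m)%nat).
  rewrite (sumR_ext (fun k => f (S m - k)%nat) (fun k => (fun j => f (S j)) (m - k)%nat)) by (intros; f_equal; lia).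
  pose proof (IHm (fun j => f (S j))) as E; cbv beta in E; rewrite E. rewrite sumR_shift. replace (S m - m)%nat with 1%nat by lia. ring.
Qed.

Lemma Cmod_sumC f m : Cmod (sumC f m) <= sumR (fun k => Cmod (f k)) m.
Proof.
  induction m; simpl. rewrite Cmod_0; lra.
  eapply Rle_trans; [apply Cmod_triangle|]. lra.
Qed.

Lemma geo R m : sumR (fun k => (R ^ S k) ^ 2) m * (R ^ 2 - 1) = (R ^ S m) ^ 2 - R ^ 2.
Proof.
  induction m. simpl. ring.
  change (sumR ?f (S m)) with (sumR f m + f m).
  rewrite Rmult_plus_distr_r, IHm. simpl. ring.
Qed.

Lemma Cmod_real (c : C) : Im c = 0 -> Cmod c = Rabs (Re c).
Proof. destruct c as [x y]. simpl. intro H. subst y. apply Cmod_R. Qed.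

Lemma upper m a z : Im (a 0%nat) = 0 -> 0 < Re (a 0%nat) -> Im (a (S m)) = 0 ->
  Ppoly (S m) a z = RtoC 0 -> 1 <= Cmod z ->
  Cmod z <= / Re (a 0%nat) *
            sqrt (sumR (fun j => Cmod (a j) ^ 2) (S m) + Re (a (S m)) ^ 2 / 4).
Proof.
  intros Hi0 Ha0 Hin HP HR.
  set (a0 := Re (a 0%nat)) in *.
  set (R := Cmod z) in *.
  set (X := R ^ S m).
  set (F := fun k => Cmult (a (S m - S k)%nat) (Cpow z (S k))).
  assert (E : Cmult (RtoC 2) (Cmult (a 0%nat) (Cpow z (S m))) =
              Copp (Cplus (a (S m)) (Cmult (RtoC 2) (sumC F m)))).
  { unfold Ppoly in HP. fold F in HP.
    change (sumC F (S m)) with (Cplus (sumC F m) (F m)) in HP.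
    unfold F at 2 in HP. rewrite Nat.sub_diag in HP.
    set (t := Cmult (a 0%nat) (Cpow z (S m))) in *.
    replace (Cmult (RtoC 2) t) with
      (Cminus (Cplus (a (S m)) (Cmult (RtoC 2) (Cplus (sumC F m) t)))
              (Cplus (a (S m)) (Cmult (RtoC 2) (sumC F m)))) by ring.
    rewrite HP. ring. }
  assert (Hm0 : Cmod (a 0%nat) = a0) by (rewrite Cmod_real by exact Hi0; apply Rabs_pos_eq; lra).
  assert (HX0 : 0 <= X) by (apply pow_le; unfold R; apply Cmod_ge_0).
  assert (I1 : 2 * a0 * X <= Cmod (a (S m)) + 2 * sumR (fun k => Cmod (a (S m - S k)%nat) * R ^ S k) m).
  { apply (f_equal Cmod) in E. rewrite Cmod_opp in E.
    rewrite !Cmod_mult, Cmod_R, Rabs_pos_eq, Hm0, Cmod_pow in E by lra. fold R X in E.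
    replace (2 * a0 * X) with (2 * (a0 * X)) by ring. rewrite E.
    eapply Rle_trans; [apply Cmod_triangle|]. rewrite Cmod_mult, Cmod_R, Rabs_pos_eq by lra.
    pose proof (Cmod_sumC F m).
    assert (sumR (fun k => Cmod (F k)) m = sumR (fun k => Cmod (a (S m - S k)%nat) * R ^ S k) m).
    { apply sumR_ext. intros k _. unfold F. rewrite Cmod_mult, Cmod_pow. reflexivity. }
    lra. }
  set (T := sumR (fun j => Cmod (a j) ^ 2) m).
  assert (Hrev : sumR (fun k => Cmod (a (S m - S k)%nat) ^ 2) m = sumR (fun k => Cmod (a (S k)) ^ 2) m).
  { rewrite <- (sumR_rev (fun j => Cmod (a j) ^ 2) m). apply sumR_ext. intros k _. reflexivity. }
  assert (HT : sumR (fun j => Cmod (a j) ^ 2) (S m) = a0 ^ 2 + sumR (fun k => Cmod (a (S k)) ^ 2) m).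
  { rewrite sumR_shift, Hm0. reflexivity. }
  rewrite HT.
  set (W := sumR (fun k => Cmod (a (S k)) ^ 2) m) in *.
  assert (HW : 0 <= W) by (apply sumR_nonneg; intro; apply pow2_ge_0).
  assert (Han : Cmod (a (S m)) ^ 2 = Re (a (S m)) ^ 2) by (rewrite Cmod2_alt, Hin; ring).
  set (G := sumR (fun k => (R ^ S k) ^ 2) m).
  assert (HG : G * (R ^ 2 - 1) = X ^ 2 - R ^ 2) by apply geo.
  assert (HG0 : 0 <= G) by (apply sumR_nonneg; intro; apply pow2_ge_0).
  assert (Main : forall l, 0 < l ->
     4 * l * a0 * X <= Re (a (S m)) ^ 2 + l ^ 2 + 4 * W + l ^ 2 * G).
  { intros l Hl.
    assert (S1 : 2 * l * Cmod (a (S m)) <= Re (a (S m)) ^ 2 + l ^ 2).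
    { rewrite <- Han. pose proof (pow2_ge_0 (Cmod (a (S m)) - l)). nra. }
    assert (S2 : 2 * l * (2 * sumR (fun k => Cmod (a (S m - S k)%nat) * R ^ S k) m) <=
                 4 * W + l ^ 2 * G).
    { rewrite <- Hrev. unfold G. rewrite <- !sumR_scal, <- sumR_plus.
      replace (2 * l * (2 * sumR (fun k => Cmod (a (S m - S k)%nat) * R ^ S k) m)) with
        (sumR (fun k => 4 * l * (Cmod (a (S m - S k)%nat) * R ^ S k)) m) by (rewrite sumR_scal; ring).
      apply sumR_le. intros k _. pose proof (pow2_ge_0 (2 * Cmod (a (S m - S k)%nat) - l * R ^ S k)). nra. }
    nra. }
  assert (Goal2 : a0 ^ 2 * R ^ 2 <= a0 ^ 2 + W + Re (a (S m)) ^ 2 / 4).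
  { destruct (Rle_lt_dec (a0 ^ 2 * R ^ 2) (a0 ^ 2 + W + Re (a (S m)) ^ 2 / 4)) as [ok|bad]; [exact ok|exfalso].
    assert (q0 : 0 < R ^ 2 - 1) by nra.
    assert (X1 : 1 <= X) by (unfold X; rewrite <- (pow1 (S m)); apply pow_incr; lra).
    set (q := R ^ 2 - 1) in *.
    set (l := 2 * a0 * q / X).
    assert (lX : l * X = 2 * a0 * q) by (unfold l; field; lra).
    assert (l0 : 0 < l) by (unfold l; apply Rdiv_lt_0_compat; nra).
    specialize (Main l l0).
    assert (M2 : X ^ 2 * (4 * l * a0 * X) <= X ^ 2 * (Re (a (S m)) ^ 2 + l ^ 2 + 4 * W + l ^ 2 * G))
      by (apply Rmult_le_compat_l; nra).
    assert (L1 : X ^ 2 * (4 * l * a0 * X) = 8 * a0 ^ 2 * q * X ^ 2).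
    { replace (X ^ 2 * (4 * l * a0 * X)) with (4 * a0 * X ^ 2 * (l * X)) by ring. rewrite lX. ring. }
    assert (L2 : X ^ 2 * (l ^ 2 * (1 + G)) = 4 * a0 ^ 2 * q * (X ^ 2 - 1)).
    { replace (X ^ 2 * (l ^ 2 * (1 + G))) with ((l * X) ^ 2 * (1 + G)) by ring. rewrite lX.
      replace (X ^ 2 - 1) with ((1 + G) * q) by (unfold q in *; nra). ring. }
    assert (D : Re (a (S m)) ^ 2 + 4 * W < 4 * a0 ^ 2 * q) by (unfold q in *; nra).
    assert (X ^ 2 * (Re (a (S m)) ^ 2 + 4 * W) <= X ^ 2 * (4 * a0 ^ 2 * q)) by (apply Rmult_le_compat_l; nra).
    assert (0 < a0 ^ 2 * q) by (apply Rmult_lt_0_compat; nra).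
    nra. }
  assert (HS : 0 <= a0 ^ 2 + W + Re (a (S m)) ^ 2 / 4) by nra.
  assert (Hsq : a0 * R <= sqrt (a0 ^ 2 + W + Re (a (S m)) ^ 2 / 4)).
  { rewrite <- (sqrt_pow2 (a0 * R)) by (unfold R; pose proof (Cmod_ge_0 z); nra).
    apply sqrt_le_1_alt. replace ((a0 * R) ^ 2) with (a0 ^ 2 * R ^ 2) by ring. exact Goal2. }
  replace (a0 ^ 2 + W + Re (a (S m)) ^ 2 / 4) with (a0 ^ 2 + W + Re (a (S m)) ^ 2 / 4) by ring.
  apply (Rmult_le_reg_l a0); [lra|].
  rewrite <- Rmult_assoc, Rinv_r, Rmult_1_l by lra. exact Hsq.
Qed.

Theorem lemma10 (n : nat) (a : nat -> C) :
  extremal n a ->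
  Im (a 0%nat) = 0 -> 0 < Re (a 0%nat) ->
  forall z : C, Ppoly n a z = RtoC 0 ->
  1 <= Cmod z /\
  Cmod z <= / Re (a 0%nat) *
            sqrt (sumR (fun j => Cmod (a j) ^ 2) n + Re (a n) ^ 2 / 4).
Proof.
  intros Hx Hi0 Ha0 z HP.
  destruct n as [|m].
  - exfalso. unfold Ppoly in HP. simpl sumC in HP. apply (f_equal Re) in HP.
    revert HP. destruct (a 0%nat) as [x y]. simpl in Ha0. compute -[Rplus Rmult Ropp Rminus]. intro HP. lra.
  - pose proof (lower _ _ _ Hx Ha0 HP) as H1. split; [exact H1|].
    apply upper; auto. apply (im_an _ _ Hx).
Qed.
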